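(* For any evaporation rate $\gamma$, the DGLS variant $(A,\gamma,tab)$ described in the context is equivalent to MGM: in every round, given the same current assignment, each agent $i$ computes the same best value $d_i^*$ (under the same tie-breaking) and the same gain $\Delta_i$ as in MGM, and hence makes the same move.
   Context: A (binary) Distributed Constraint Optimization Problem (DCOP) consists of agents $1,\dots,n$, each controlling one variable $x_i$ with finite domain $D_i$, and binary constraint functions $f_{ij}:D_i\times D_j\to\mathbb{R}_{\ge0}$ with $f_{ji}=f_{ij}^T$; $\mathcal{N}_i$ is the set of neighbors of $i$. Write $\check f_{ij}=\min f_{ij}$, $\hat f_{ij}=\max f_{ij}$. MGM (Maximum Gain Message): in each synchronous round, each agent $i$, knowing neighbors' current values $d_j$, computes $d_i^*\in\arg\min_{d\in D_i}\sum_{j\in\mathcal{N}_i} f_{ij}(d,d_j)$ and gain $\Delta_i=\sum_{j\in\mathcal{N}_i}[f_{ij}(d_i,d_j)-f_{ij}(d_i^*,d_j)]$, exchanges gains with neighbors, and sets $d_i\gets d_i^*$ iff $\Delta_i>0$ and $\Delta_i$ is the best improvement among itself and its neighbors. DGLS with parameters $(A,\gamma,tab)$ (additive manner, evaporation rate $\gamma$, table scope): each agent $i$ keeps, for each $j\in\mathcal{N}_i$, a cost modifier $M_{ij}$ (a $|D_i|\times|D_j|$ real matrix), initialized to $0$, and uses effective cost $\mathrm{EffCost}(d_i,j,d_j)=f_{ij}(d_i,d_j)+M_{ij}(d_i,d_j)$. Initially each agent picks a random value and sends it to its neighbors. In each synchronous round agent $i$: (1) sets $\bar P_i=\emptyset$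 and receives neighbors' values $d_j$; (2) computes $d_i^*\in\arg\min_{d\in D_i}\sum_{j}\mathrm{EffCost}(d,j,d_j)$ and gain $\Delta_i=\sum_{j}[\mathrm{EffCost}(d_i,j,d_j)-\mathrm{EffCost}(d_i^*,j,d_j)]$, and exchanges gains; (3) if $\Delta_i>0$ and $\Delta_i$ is the best improvement among itself and its neighbors, sets $d_i\gets d_i^*$; otherwise, if no neighbor can improve, for each $j\in\mathcal{N}_i$ declares $f_{ij}$ violated with probability $\eta=\frac{f_{ij}(d_i,d_j)-\check f_{ij}}{\hat f_{ij}-\check f_{ij}}$, and for each violated one adds $j$ to $\bar P_i$ and sends SYNC to $j$; (4) lets $\tilde P_i$ be the set of neighbors from which it received SYNC; (5) for each $j$: $M_{ij}\gets\gamma M_{ij}$ entrywise, then if $j\in\bar P_i\cup\tilde P_i$ increases every entry of $M_{ij}$ by 1; (6) sends $d_i$ to neighbors. *)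

(* Defs.v *)
From HB Require Import structures.
From mathcomp Require Import all_boot all_order all_algebra.
Unset Printing Implicit Defensive.
Import Order.TTheory GRing.Theory Num.Theory.
Local Open Scope ring_scope.

Section DCOP.
Variables (R : realFieldType) (A : finType) (D : A -> finType).
(* neighbourhood relation: j \in N_i  <->  N i j *)
Variable N : rel A.
Variable f : forall i j : A, D i -> D j -> R.

Definition assignment := forall i : A, D i.
(* cost modifiers M_ij, viewed as functions D_i x D_j -> R (= |D_i|x|D_j| matrices) *)
Definition modifiers := forall i j : A, D i -> D j -> R.

Definition argmin_set (i : A) (c : D i -> R) : {set D i} :=
  [set d | [forall e, c d <= c e]].

Definition tiebreak := forall i : A, {set D i} -> D i.

(* "Delta_i is the best improvement among itself and its neighbours";
   ties between equal gains are resolved by a priority relation prio. *)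
Definition moves (prio : rel A) (g : A -> R) (i : A) : bool :=
  (0 < g i) && [forall j, N i j ==> ((g j < g i) || ((g j == g i) && prio i j))].

Definition mgm_cost (a : assignment) (i : A) (d : D i) : R :=
  \sum_(j | N i j) f i j d (a j).

Definition mgm_dstar (tb : tiebreak) (a : assignment) (i : A) : D i :=
  tb i (argmin_set i (mgm_cost a i)).

Definition mgm_gain (tb : tiebreak) (a : assignment) (i : A) : R :=
  mgm_cost a i (a i) - mgm_cost a i (mgm_dstar tb a i).

Definition mgm_step (tb : tiebreak) (prio : rel A) (a : assignment) : assignment :=
  fun i => if moves prio (mgm_gain tb a) i then mgm_dstar tb a i else a i.

Record state := State { vals : assignment; mods : modifiers }.

Definition eff_cost (st : state) (i : A) (d : D i) : R :=
  \sum_(j | N i j) (f i j d (vals st j) + mods st i j d (vals st j)).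

Definition dgls_dstar (tb : tiebreak) (st : state) (i : A) : D i :=
  tb i (argmin_set i (eff_cost st i)).

Definition dgls_gain (tb : tiebreak) (st : state) (i : A) : R :=
  eff_cost st i (vals st i) - eff_cost st i (dgls_dstar tb st i).

(* i declares f_ij violated (j \in \bar P_i): only possible when i does not move
   and no neighbour can improve; [viol i j] is the outcome of the random draw. *)
Definition declared (tb : tiebreak) (prio : rel A) (st : state)
    (viol : A -> A -> bool) (i j : A) : bool :=
  let g := dgls_gain tb st in
  [&& N i j, ~~ moves prio g i, [forall k, N i k ==> (g k <= 0)] & viol i j].

Definition dgls_round (tb : tiebreak) (prio : rel A) (gamma : R)
    (st : state) (viol : A -> A -> bool) : state :=
  let g := dgls_gain tb st in
  State (fun i => if moves prio g i then dgls_dstar tb st i else vals st i)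
        (fun i j x y => gamma * mods st i j x y +
           (if declared tb prio st viol i j || (N i j && declared tb prio st viol j i)
            then 1 else 0)).

(* state at the beginning of round t; modifiers start at 0 *)
Fixpoint dgls_run (tb : tiebreak) (prio : rel A) (gamma : R) (a0 : assignment)
    (viol : nat -> A -> A -> bool) (t : nat) : state :=
  match t with
  | 0 => State a0 (fun i j _ _ => 0)
  | t'.+1 => dgls_round tb prio gamma (dgls_run tb prio gamma a0 viol t') (viol t')
  end.

End DCOP.

(* Main.v *)
Require Import Defs.
From HB Require Import structures.
From mathcomp Require Import all_boot all_order all_algebra.
From Stdlib Require Import FunctionalExtensionality.
Import Order.TTheory GRing.Theory Num.Theory.
Local Open Scope ring_scope.

Lemma mods_const (R : realFieldType) (A : finType) (D : A -> finType)
    (N : rel A) (f : forall i j : A, D i -> D j -> R) (gamma : R) (tb : tiebreak A D)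
    (prio : rel A) (a0 : assignment A D) (viol : nat -> A -> A -> bool) (t : nat) :
  forall i j x y x' y',
    mods R A D (dgls_run R A D N f tb prio gamma a0 viol t) i j x y =
    mods R A D (dgls_run R A D N f tb prio gamma a0 viol t) i j x' y'.
Proof.
elim: t => [|t IH] i j x y x' y' //=.
by rewrite (IH i j x y x' y').
Qed.

Theorem theorem4 (R : realFieldType) (A : finType) (D : A -> finType)
    (N : rel A) (f : forall i j : A, D i -> D j -> R)
    (N_sym : forall i j, N i j = N j i) (N_irr : forall i, ~~ N i i)
    (f_sym : forall i j (x : D i) (y : D j), f j i y x = f i j x y)
    (f_ge0 : forall i j (x : D i) (y : D j), 0 <= f i j x y)
    (gamma : R) (tb : tiebreak A D)
    (tb_spec : forall i (S : {set D i}), S != set0 -> tb i S \in S)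
    (prio : rel A) (a0 : assignment A D) (viol : nat -> A -> A -> bool) (t : nat) :
  let st := dgls_run R A D N f tb prio gamma a0 viol t in
  forall i : A,
    dgls_dstar R A D N f tb st i = mgm_dstar R A D N f tb (vals R A D st) i /\
    dgls_gain R A D N f tb st i = mgm_gain R A D N f tb (vals R A D st) i /\
    vals R A D (dgls_round R A D N f tb prio gamma st (viol t)) i
      = mgm_step R A D N f tb prio (vals R A D st) i.
Proof.
move=> st.
have Heff : forall i d, eff_cost R A D N f st i d =
   mgm_cost R A D N f (vals R A D st) i d +
   \sum_(j | N i j) mods R A D st i j (vals R A D st i) (vals R A D st j).
  move=> i d; rewrite /eff_cost /mgm_cost -big_split /=.
  apply: eq_bigr => j _; congr (_ + _).
  exact: mods_const.
have Harg : forall i, argmin_set R A D i (eff_cost R A D N f st i) =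
                      argmin_set R A D i (mgm_cost R A D N f (vals R A D st) i).
  move=> i; apply/setP => d; rewrite !inE.
  apply: eq_forallb => e; by rewrite !Heff lerD2r.
have Hd : forall i, dgls_dstar R A D N f tb st i = mgm_dstar R A D N f tb (vals R A D st) i.
  by move=> i; rewrite /dgls_dstar /mgm_dstar Harg.
have Hg : forall i, dgls_gain R A D N f tb st i = mgm_gain R A D N f tb (vals R A D st) i.
  move=> i; rewrite /dgls_gain /mgm_gain Hd !Heff.
  by rewrite opprD addrACA subrr addr0.
have Hgf : dgls_gain R A D N f tb st = mgm_gain R A D N f tb (vals R A D st).
  exact: functional_extensionality.
move=> i; split; first exact: Hd.
split; first exact: Hg.
by rewrite /dgls_round /mgm_step /= Hgf Hd.
Qed.
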